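(* Assume the setting in the context, with a decomposition of $\mathcal X$ over $A$, a cost function $g\in\mathcal G_s$ and $\alpha\in(0,1)$. Then $\{(A,\rho_i\circ B,g,\alpha)\}_{i\in\mathcal I}$ is a decomposition (in the sense of Definition 2) of $(A,B,g,\alpha)$ if and only if for every choice of optimal control laws $u_i^*$ of the subproblems $(A,\rho_i\circ B,g,\alpha)$, $i\in\mathcal I$, there exists an optimal control law $u^*$ of $(A,B,g,\alpha)$ such that $$\rho_i\big(Ax+Bu^*(x)\big)=A\rho_i(x)+\rho_i\big(Bu_i^*(\rho_i(x))\big)\qquad\forall x\in\mathcal X,\ \forall i\in\mathcal I.$$
   Context: Let $\mathcal F$ be a field and $\mathcal X,\mathcal U$ finite-dimensional vector spaces over $\mathcal F$. Let $A:\mathcal X\to\mathcal X$ and $B:\mathcal U\to\mathcal X$ be linear maps with $B$ injective, and consider the system $x_{t+1}=Ax_t+Bu_t$ and a cost $g:\mathcal X\to\mathbb R_{\ge 0}$ with $g(x)=0\iff x=0$. Standing assumption: all minima appearing below are attained. Infinite-horizon problem $(A,B,g,\alpha)$: policies $\pi(x_0)=(\pi_t(x_0))_{t\in\mathbb Z_+}\in\mathcal U^{\mathbb Z_+}$, cost $J(x_0,\pi)=\sum_{t\ge0}\alpha^tg(x_t)$ with $x_{t+1}=Ax_t+B\pi_t(x_0)$; $J^*(x_0)=\min_\pi J(x_0,\pi)$, which satisfies $J^*(x)=g(x)+\alpha\min_uJ^*(Ax+Bu)$. An optimal control law of $(A,B,g,\alpha)$ is a map $u^*:\mathcal X\to\mathcal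 U$ with $u^*(x)\in\operatorname{argmin}_{u\in\mathcal U}J^*(Ax+Bu)$. A decomposition of $\mathcal X$ over $A$ is a direct sum $\mathcal X=\mathcal X_1\oplus\cdots\oplus\mathcal X_r$ with $r>1$ and $A\mathcal X_i\subseteq\mathcal X_i$, $i\in\mathcal I=\{1,\dots,r\}$; $\rho_i:\mathcal X\to\mathcal X_i$ is the projection along the other summands. $\mathcal G_s$ is the set of $h:\mathcal X\to\mathbb R_{\ge0}$ with $h(x)=\sum_i h(\rho_i(x))$ for all $x$. Subproblem $(A,\rho_i\circ B,g,\alpha)$: the system $x_{i,t+1}=Ax_{i,t}+\rho_i(Bu_{i,t})$ with states in $\mathcal X_i$ and inputs in $\mathcal U$, policies $\pi_i(x_{i,0})\in\mathcal U^{\mathbb Z_+}$, cost $J_i(x_{i,0},\pi_i)=\sum_{t\ge0}\alpha^tg(x_{i,t})$, optimal cost $J_i^*$, optimal policies $\pi_i^*$ with components $\pi^*_{i,t}$; an optimal control law is $u_i^*:\mathcal X_i\to\mathcal U$ with $u_i^*(z)\in\operatorname{argmin}_uJ_i^*(Az+\rho_i(Bu))$. Definition 2: $\{(A,\rho_i\circ B,g,\alpha)\}_{i\in\mathcal I}$ is a decomposition of $(A,B,g,\alpha)$ if for every $x\in\mathcal X$: $J^*(x)=\sum_iJ_i^*(\rho_i(x))$, and for every choice of optimal policies $\pi_i^*(\rho_i(x))$ there is an optimal policy $\pi^*(x)$ of $(A,B,g,\alpha)$ with $B\pi_t^*(x)=\sum_{i}\rho_i\big(B\pi^*_{i,t}(\rho_i(x))\big)$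 for all $t\in\mathbb Z_+$. *)

(* Defs.v *)
From HB Require Import structures.
From mathcomp Require Import all_boot all_order all_algebra.
From Stdlib Require Import Reals.
Set Implicit Arguments. Unset Strict Implicit. Unset Printing Implicit Defensive.
Import GRing.Theory.
Local Open Scope ring_scope.

(* Costs live in [0, +oo]: extended nonnegative values. *)
Inductive ecost := Fin of R | Infty.

Definition ecost_le (a b : ecost) : Prop :=
  match a, b with
  | Fin x, Fin y => Rle x y
  | _, Infty => True
  | Infty, Fin _ => False
  end.

Definition ecost_add (a b : ecost) : ecost :=
  match a, b with
  | Fin x, Fin y => Fin (Rplus x y)
  | _, _ => Infty
  end.

Definition has_cost (s : nat -> R) (v : ecost) : Prop :=
  match v with
  | Fin c => Un_cv s c
  | Infty => forall M : R, exists n, Rlt M (s n)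
  end.

Section Sys.
Variables (F : fieldType) (X U : vectType F).

Fixpoint traj (f : X -> X) (b : U -> X) (x0 : X) (pi : nat -> U) (t : nat) : X :=
  match t with
  | 0 => x0
  | t'.+1 => f (traj f b x0 pi t') + b (pi t')
  end.

Fixpoint psum (g : X -> R) (alpha : R) (x : nat -> X) (n : nat) : R :=
  match n with
  | 0 => R0
  | n'.+1 => Rplus (psum g alpha x n') (Rmult (pow alpha n') (g (x n')))
  end.

Definition cost_is f b g alpha x0 pi (v : ecost) : Prop :=
  has_cost (psum g alpha (traj f b x0 pi)) v.

Definition Jstar_is f b g alpha x (v : ecost) : Prop :=
  (exists pi, cost_is f b g alpha x pi v) /\
  (forall pi w, cost_is f b g alpha x pi w -> ecost_le v w).

Definition optimal_policy f b g alpha x pi : Prop :=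
  exists v, Jstar_is f b g alpha x v /\ cost_is f b g alpha x pi v.

Definition argmin_Jstar f b g alpha (x : X) (u : U) : Prop :=
  forall u' v v', Jstar_is f b g alpha (f x + b u) v ->
    Jstar_is f b g alpha (f x + b u') v' -> ecost_le v v'.

Definition optimal_law f b g alpha (D : X -> Prop) (ustar : X -> U) : Prop :=
  forall x, D x -> argmin_Jstar f b g alpha x (ustar x).

Definition minima_attained f b g alpha (D : X -> Prop) : Prop :=
  (forall x, D x -> exists v, Jstar_is f b g alpha x v) /\
  (forall x, D x -> exists u, argmin_Jstar f b g alpha x u).

Definition decomposition_over r (Xs : 'I_r -> {vspace X}) (A : 'End(X)) : Prop :=
  is_true (leq 2 r) /\ (\sum_(i < r) Xs i)%VS = fullv /\ directv (\sum_(i < r) Xs i) /\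
  (forall i, (A @: Xs i <= Xs i)%VS).

Definition projections r (Xs : 'I_r -> {vspace X}) (rho : 'I_r -> 'End(X)) : Prop :=
  forall x, (forall i, rho i x \in Xs i) /\ x = \sum_(i < r) rho i x.

Definition cost_fun (g : X -> R) : Prop :=
  forall x, Rle R0 (g x) /\ (g x = R0 <-> x = 0).

Definition in_Gs r (rho : 'I_r -> 'End(X)) (g : X -> R) : Prop :=
  forall x, g x = \big[Rplus/R0]_(i < r) g (rho i x).

Definition is_decomposition_of r (rho : 'I_r -> 'End(X)) (A : 'End(X))
    (B : 'Hom(U, X)) (g : X -> R) (alpha : R) : Prop :=
  forall x : X,
    (forall (v : ecost) (vs : 'I_r -> ecost),
        Jstar_is A B g alpha x v ->
        (forall i, Jstar_is A (fun u => rho i (B u)) g alpha (rho i x) (vs i)) ->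
        v = \big[ecost_add/Fin R0]_(i < r) vs i) /\
    (forall pis : 'I_r -> nat -> U,
        (forall i, optimal_policy A (fun u => rho i (B u)) g alpha (rho i x) (pis i)) ->
        exists pi, optimal_policy A B g alpha x pi /\
          forall t, B (pi t) = \sum_(i < r) rho i (B (pis i t))).

End Sys.

(* Main.v *)
Require Import Defs.
From HB Require Import structures.
From mathcomp Require Import all_boot all_order all_algebra.
From Stdlib Require Import Reals Lra Classical IndefiniteDescription.
Import GRing.Theory.

Section RPsec.
Local Open Scope R_scope.

Definition step (c a : R) (v : ecost) : ecost :=
  match v with Fin y => Fin (c + a * y) | Infty => Infty end.

Lemma ele_refl v : ecost_le v v.
Proof. case: v => //= x; lra. Qed.

Lemma ele_trans u v w : ecost_le u v -> ecost_le v w -> ecost_le u w.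
Proof. case: u; case: v; case: w => //= *; lra. Qed.

Lemma ele_antisym u v : ecost_le u v -> ecost_le v u -> u = v.
Proof. case: u; case: v => //= x y *; f_equal; lra. Qed.

Lemma step_le c a v w : 0 < a -> ecost_le (step c a v) (step c a w) <-> ecost_le v w.
Proof.
move=> ha; case: v; case: w => //= x y; split => H.
- apply: (Rmult_le_reg_l a) => //; lra.
- have := Rmult_le_compat_l a _ _ (Rlt_le _ _ ha) H; lra.
Qed.

Lemma eadd_le v1 v2 w1 w2 : ecost_le v1 w1 -> ecost_le v2 w2 ->
  ecost_le (ecost_add v1 v2) (ecost_add w1 w2).
Proof. case: v1; case: v2; case: w1; case: w2 => //= *; lra. Qed.

Lemma ebig_le r (v w : 'I_r -> ecost) : (forall i, ecost_le (v i) (w i)) ->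
  ecost_le (\big[ecost_add/Fin R0]_(i < r) v i) (\big[ecost_add/Fin R0]_(i < r) w i).
Proof.
move=> H; apply: (big_ind2 ecost_le) => //; first exact: ele_refl.
by move=> *; apply: eadd_le.
Qed.

Definition mono (s : nat -> R) := forall n, s n <= s (S n).

Lemma mono_le s n m : mono s -> (n <= m)%coq_nat -> s n <= s m.
Proof.
move=> hs; elim => [|m' hle IH]; first lra.
by apply: Rle_trans IH (hs m').
Qed.

Lemma has_cost_ex s : mono s -> exists v, has_cost s v.
Proof.
move=> hs; case: (classic (exists M, forall n, s n <= M)) => [[M HM]|HN].
- have hb : has_ub s.
    exists M => x [n ->]; exact: HM.
  have [l Hl] := growing_cv s hs hb.
  by exists (Fin l).
- exists Infty => M /=.
  apply: NNPP => HnM; apply: HN; exists M => n.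
  apply: Rnot_lt_le => Hn; apply: HnM; by exists n.
Qed.

Lemma has_cost_uniq s v w : mono s -> has_cost s v -> has_cost s w -> v = w.
Proof.
have key : forall c, mono s -> Un_cv s c -> (forall M, exists n, M < s n) -> False.
  move=> c hs Hc HI.
  have [N HN] := Hc 1 Rlt_0_1.
  have [n Hn] := HI (c + 1).
  have H1 := HN (Nat.max n N) (Nat.le_max_r _ _).
  have H2 := mono_le s n (Nat.max n N) hs (Nat.le_max_l n N).
  move: H1; rewrite /R_dist => /Rabs_def2 [H1 _]; lra.
move=> hs; case: v => [x|]; case: w => [y|] //= Hx Hy.
- by rewrite (UL_sequence _ _ _ Hx Hy).
- by case: (key _ hs Hx Hy).
- by case: (key _ hs Hy Hx).
Qed.

Lemma has_cost_ext s s' v : (forall n, s n = s' n) -> has_cost s v -> has_cost s' v.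
Proof.
move=> E; case: v => /= [c H eps he|H M].
- have [N HN] := H eps he; exists N => n hn; rewrite -E; exact: HN.
- have [n Hn] := H M; exists n; by rewrite -E.
Qed.

Lemma has_cost_step s s' c a w : (forall n, s (S n) = c + a * s' n) -> 0 < a ->
  has_cost s' w -> has_cost s (step c a w).
Proof.
move=> E ha; case: w => /= [y H eps he|H M].
- have [N HN] := H (eps / a) (Rdiv_lt_0_compat _ _ he ha).
  exists (S N) => n hn; case: n hn => [|n] hn; first by inversion hn.
  rewrite E /R_dist.
  have -> : c + a * s' n - (c + a * y) = a * (s' n - y) by ring.
  rewrite Rabs_mult Rabs_right; last lra.
  have := HN n (le_S_n _ _ hn); rewrite /R_dist => h.
  have := Rmult_lt_compat_l a _ _ ha h.
  have -> : a * (eps / a) = eps by field; lra.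
  done.
- have [n Hn] := H ((M - c) / a); exists (S n); rewrite E.
  have := Rmult_lt_compat_l a _ _ ha Hn.
  have -> : a * ((M - c) / a) = M - c by field; lra.
  lra.
Qed.

Definition nonneg (s : nat -> R) := forall n, 0 <= s n.

Lemma has_cost_add s1 s2 v1 v2 : nonneg s1 -> nonneg s2 ->
  has_cost s1 v1 -> has_cost s2 v2 ->
  has_cost (fun n => s1 n + s2 n) (ecost_add v1 v2).
Proof.
move=> n1 n2; case: v1 => [x|]; case: v2 => [y|] /= H1 H2.
- exact: CV_plus.
- move=> M; have [n Hn] := H2 M; exists n; have := n1 n; lra.
- move=> M; have [n Hn] := H1 M; exists n; have := n2 n; lra.
- move=> M; have [n Hn] := H1 M; exists n; have := n2 n; lra.
Qed.

Lemma big_nonneg r (f : 'I_r -> R) : (forall i, 0 <= f i) ->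
  0 <= \big[Rplus/R0]_(i < r) f i.
Proof.
move=> H; apply: (big_ind (fun x => 0 <= x)); first lra.
  move=> *; lra.
by move=> i _; apply: H.
Qed.

Lemma has_cost_big r (s : 'I_r -> nat -> R) (v : 'I_r -> ecost) :
  (forall i n, 0 <= s i n) -> (forall i, has_cost (s i) (v i)) ->
  has_cost (fun n => \big[Rplus/R0]_(i < r) s i n) (\big[ecost_add/Fin R0]_(i < r) v i).
Proof.
elim: r s v => [|r IH] s v hn hc.
- rewrite big_ord0; apply: (has_cost_ext (fun _ => R0)).
    by move=> n; rewrite big_ord0.
  by move=> eps he; exists O => n _; rewrite /R_dist Rminus_diag Rabs_R0.
- rewrite big_ord_recl.
  apply: (has_cost_ext (fun n => s ord0 n +
            \big[Rplus/R0]_(i < r) s (lift ord0 i) n)).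
    by move=> n; rewrite big_ord_recl.
  apply: has_cost_add => //.
  + by move=> n; apply: big_nonneg => i; apply: hn.
  + apply: IH => [i n|i]; [apply: hn|apply: hc].
Qed.

Lemma big_Rplus_split r (f g : 'I_r -> R) :
  \big[Rplus/R0]_(i < r) (f i + g i) =
  \big[Rplus/R0]_(i < r) f i + \big[Rplus/R0]_(i < r) g i.
Proof.
apply: (big_ind3 (fun x y z => x = y + z)); first lra.
  by move=> ? ? ? ? ? ? -> ->; ring.
by [].
Qed.

Lemma big_Rmult r (c : R) (f : 'I_r -> R) :
  \big[Rplus/R0]_(i < r) (c * f i) = c * \big[Rplus/R0]_(i < r) f i.
Proof.
apply: (big_ind2 (fun x y => x = c * y)); first ring.
  by move=> ? ? ? ? -> ->; ring.
by [].
Qed.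

End RPsec.

Set Implicit Arguments. Unset Strict Implicit.
Set Implicit Arguments. Unset Strict Implicit.

Section DP.
Variables (F : fieldType) (X U : vectType F) (f : X -> X) (b : U -> X)
  (g : X -> R) (alpha : R).
Hypothesis hg : forall x, Rle R0 (g x).
Hypothesis ha : Rlt R0 alpha.

Local Open Scope R_scope.

Lemma traj_shift x pi t :
  traj f b x pi t.+1 = traj f b (GRing.add (f x) (b (pi O))) (fun t => pi t.+1) t.
Proof.
elim: t => [|t IH] //.
rewrite -[traj _ _ _ _ t.+2]/(GRing.add (f (traj f b x pi t.+1)) (b (pi t.+1))).
by rewrite IH.
Qed.

Lemma psum_shift x pi n :
  psum g alpha (traj f b x pi) n.+1 =
  g x + alpha * psum g alpha (traj f b (GRing.add (f x) (b (pi O))) (fun t => pi t.+1)) n.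
Proof.
elim: n => [|n IH]; first by simpl; ring.
set x' := GRing.add (f x) (b (pi O)).
set pi' := fun t => pi t.+1.
rewrite -[psum _ _ _ n.+2]/(Rplus (psum g alpha (traj f b x pi) n.+1)
   (Rmult (pow alpha n.+1) (g (traj f b x pi n.+1)))).
rewrite -[psum _ _ (traj f b x' pi') n.+1]/(Rplus (psum g alpha (traj f b x' pi') n)
   (Rmult (pow alpha n) (g (traj f b x' pi' n)))).
rewrite IH traj_shift -/x' -/pi' /=; ring.
Qed.

Lemma psum_mono s : mono (psum g alpha s).
Proof.
move=> n /=; have := pow_lt _ n ha; have := hg (s n) => h1 h2.
have := Rmult_le_pos _ _ (Rlt_le _ _ h2) h1; lra.
Qed.

Lemma psum_nonneg s n : 0 <= psum g alpha s n.
Proof.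
elim: n => [|n IH] /=; first lra.
have := psum_mono s n; simpl; lra.
Qed.

Lemma cost_ex x pi : exists v, cost_is f b g alpha x pi v.
Proof. exact: has_cost_ex (psum_mono _). Qed.

Lemma cost_uniq x pi v w : cost_is f b g alpha x pi v -> cost_is f b g alpha x pi w -> v = w.
Proof. exact: has_cost_uniq (psum_mono _). Qed.

Lemma cost_step x pi w :
  cost_is f b g alpha (GRing.add (f x) (b (pi O))) (fun t => pi t.+1) w ->
  cost_is f b g alpha x pi (step (g x) alpha w).
Proof. by apply: has_cost_step => // n; rewrite psum_shift. Qed.

Lemma cost_step_inv x pi v w :
  cost_is f b g alpha x pi v ->
  cost_is f b g alpha (GRing.add (f x) (b (pi O))) (fun t => pi t.+1) w ->
  v = step (g x) alpha w.
Proof. by move=> H1 H2; apply: cost_uniq H1 (cost_step H2). Qed.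

Lemma Jstar_uniq x v w : Jstar_is f b g alpha x v -> Jstar_is f b g alpha x w -> v = w.
Proof.
move=> [[p1 H1] L1] [[p2 H2] L2]; apply: ele_antisym; [exact: L1 H2|exact: L2 H1].
Qed.

Definition pcons (u : U) (pi : nat -> U) : nat -> U :=
  fun t => match t with O => u | S t' => pi t' end.

Lemma bellman x u v w : Jstar_is f b g alpha x v ->
  Jstar_is f b g alpha (GRing.add (f x) (b u)) w -> ecost_le v (step (g x) alpha w).
Proof.
move=> [_ L] [[p H] _]; apply: (L (pcons u p)).
by apply: cost_step.
Qed.

Lemma opt_step x pi :
  (exists w, Jstar_is f b g alpha (GRing.add (f x) (b (pi O))) w) ->
  optimal_policy f b g alpha x pi ->
  argmin_Jstar f b g alpha x (pi O) /\
  optimal_policy f b g alpha (GRing.add (f x) (b (pi O))) (fun t => pi t.+1).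
Proof.
move=> [w Hw] [v [Hv Hc]].
have [w' Hw'] := cost_ex (GRing.add (f x) (b (pi O))) (fun t => pi t.+1).
have E := cost_step_inv Hc Hw'.
have hww' : ecost_le w w' := proj2 Hw _ _ Hw'.
split.
- move=> u' w1 w2 H1 H2.
  rewrite (Jstar_uniq H1 Hw).
  apply: ele_trans hww' _.
  apply/(step_le (g x) alpha _ _ ha); rewrite -E.
  exact: bellman Hv H2.
- exists w; split => //.
  have : ecost_le w' w.
    apply/(step_le (g x) alpha _ _ ha); rewrite -E; exact: bellman Hv Hw.
  by move=> h; rewrite (ele_antisym _ _ hww' h).
Qed.

Lemma opt_argmin_all (D : X -> Prop) :
  (forall z u, D z -> D (GRing.add (f z) (b u))) ->
  (forall z, D z -> exists v, Jstar_is f b g alpha z v) ->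
  forall t z pi, D z -> optimal_policy f b g alpha z pi ->
  argmin_Jstar f b g alpha (traj f b z pi t) (pi t).
Proof.
move=> hD hJ; elim => [|t IH] z pi Dz Hopt.
- by case: (opt_step (hJ _ (hD _ (pi O) Dz)) Hopt).
- rewrite traj_shift.
  have [_ H2] := opt_step (hJ _ (hD _ (pi O) Dz)) Hopt.
  exact: (IH _ (fun t => pi t.+1) (hD _ _ Dz) H2).
Qed.

End DP.
Set Implicit Arguments. Unset Strict Implicit.

Section LA.
Local Open Scope ring_scope.
Variables (F : fieldType) (X U : vectType F) (A : 'End(X)) (B : 'Hom(U, X))
  (r : nat) (Xs : 'I_r -> {vspace X}) (rho : 'I_r -> 'End(X)).
Hypothesis hdec : decomposition_over Xs A.
Hypothesis hproj : projections Xs rho.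

Lemma proj_unique (a : 'I_r -> X) : (forall k, a k \in Xs k) ->
  forall i, rho i (\sum_(k < r) a k) = a i.
Proof.
move=> ha i; set s := \sum_(k < r) a k.
have [_ [_ [hdir _]]] := hdec.
have Hz := (directv_sum_independent hdir (fun k => rho k s - a k)).
have : rho i s - a i = 0.
  apply: Hz => // [k _|]; first by rewrite memvB //; case: (hproj s) => ->.
  by rewrite sumrB -(proj2 (hproj s)) subrr.
by move/eqP; rewrite subr_eq0 => /eqP.
Qed.

Lemma proj_in i x : rho i x \in Xs i.
Proof. by case: (hproj x). Qed.

Lemma proj_sum x : \sum_(k < r) rho k x = x.
Proof. by case: (hproj x). Qed.

Lemma proj_A i x : rho i (A x) = A (rho i x).
Proof.
rewrite -{1}(proj_sum x) linear_sum proj_unique // => k.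
have [_ [_ [_ hA]]] := hdec.
by apply: (subvP (hA k)); apply: memv_img; apply: proj_in.
Qed.

Lemma proj_of_in i z : z \in Xs i -> rho i z = z.
Proof.
move=> hz.
have H : rho i (\sum_(k < r) (if k == i then z else 0)) = (if i == i then z else 0).
  apply: proj_unique => k; by case: eqP => [->|_] //; rewrite mem0v.
move: H; rewrite eqxx (bigD1 i) //= eqxx big1 ?addr0 //.
by move=> k /negbTE ->.
Qed.

Lemma proj_proj i j x : rho i (rho j x) = if i == j then rho i x else 0.
Proof.
have H : rho i (\sum_(k < r) (if k == j then rho j x else 0)) = (if i == j then rho j x else 0).
  apply: proj_unique => k; by case: eqP => [->|_]; rewrite ?proj_in ?mem0v.
move: H; rewrite (bigD1 j) //= eqxx big1 ?addr0; first by move=> ->; case: eqP => [->|].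
by move=> k /negbTE ->.
Qed.

Lemma proj_sumB i (w : 'I_r -> X) : rho i (\sum_(j < r) rho j (w j)) = rho i (w i).
Proof.
by rewrite proj_unique // => k; apply: proj_in.
Qed.

End LA.
Set Implicit Arguments. Unset Strict Implicit.

Lemma my_choice (I T : Type) (P : I -> T -> Prop) :
  (forall i, exists v, P i v) -> exists c : I -> T, forall i, P i (c i).
Proof.
move=> H; exists (fun i => proj1_sig (constructive_indefinite_description _ (H i))).
by move=> i; case: (constructive_indefinite_description _ (H i)).
Qed.

Section Main.
Local Open Scope ring_scope.
Variables (F : fieldType) (X U : vectType F) (A : 'End(X)) (B : 'Hom(U, X))
  (r : nat) (Xs : 'I_r -> {vspace X}) (rho : 'I_r -> 'End(X)) (g : X -> R) (alpha : R).
Hypothesis hdec : decomposition_over Xs A.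
Hypothesis hproj : projections Xs rho.
Hypothesis hg : forall x, Rle R0 (g x).
Hypothesis hGs : in_Gs rho g.
Hypothesis ha : Rlt R0 alpha.

Local Notation bi i := (fun u => rho i (B u)).

Lemma traj_proj i x pi pis :
  (forall t, rho i (B (pi t)) = rho i (B (pis t))) ->
  forall t, rho i (traj A B x pi t) = traj A (bi i) (rho i x) pis t.
Proof.
move=> H; elim=> [|t IH] //=.
by rewrite linearD /= (proj_A hdec hproj) IH H.
Qed.

Lemma traj_in i z pis t : z \in Xs i -> traj A (bi i) z pis t \in Xs i.
Proof.
move=> hz; elim: t => [|t IH] //=.
have [_ [_ [_ hA]]] := hdec.
apply: memvD; last exact: (proj_in hproj).
by apply: (subvP (hA i)); apply: memv_img.
Qed.

Lemma psum_split x pi (pis : 'I_r -> nat -> U) :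
  (forall i t, rho i (B (pi t)) = rho i (B (pis i t))) ->
  forall n, psum g alpha (traj A B x pi) n =
    \big[Rplus/R0]_(i < r) psum g alpha (traj A (bi i) (rho i x) (pis i)) n.
Proof.
move=> H; elim=> [|n IH].
  rewrite /=; symmetry; apply: (big_ind (fun y => y = R0)) => // ? ? -> ->; exact: Rplus_0_r.
rewrite [LHS]/= IH hGs -big_Rmult -big_Rplus_split.
apply: eq_bigr => i _ /=.
by rewrite (traj_proj x (H i)).
Qed.


Lemma cost_split x pi (pis : 'I_r -> nat -> U) (c : 'I_r -> ecost) :
  (forall i t, rho i (B (pi t)) = rho i (B (pis i t))) ->
  (forall i, cost_is A (bi i) g alpha (rho i x) (pis i) (c i)) ->
  cost_is A B g alpha x pi (\big[ecost_add/Fin R0]_(i < r) c i).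
Proof.
move=> H Hc; rewrite /cost_is.
apply: (has_cost_ext (fun n => \big[Rplus/R0]_(i < r)
   psum g alpha (traj A (bi i) (rho i x) (pis i)) n)).
  by move=> n; rewrite (psum_split x H).
apply: has_cost_big => // i n; exact: psum_nonneg.
Qed.

Lemma lower x v (vs : 'I_r -> ecost) :
  Jstar_is A B g alpha x v ->
  (forall i, Jstar_is A (bi i) g alpha (rho i x) (vs i)) ->
  ecost_le (\big[ecost_add/Fin R0]_(i < r) vs i) v.
Proof.
move=> [[p Hp] _] Hvs.
have [c Hc] := my_choice (fun i => cost_ex A (bi i) hg ha (rho i x) p).
have E := cost_uniq hg ha Hp (cost_split (pis := fun _ => p) (fun i t => erefl) Hc).
rewrite E; apply: ebig_le => i.
exact: (proj2 (Hvs i) _ _ (Hc i)).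
Qed.

Lemma combine x v (pis : 'I_r -> nat -> U) :
  Jstar_is A B g alpha x v ->
  (forall i, optimal_policy A (bi i) g alpha (rho i x) (pis i)) ->
  (forall t, exists u, B u = \sum_(j < r) rho j (B (pis j t))) ->
  exists pi, (optimal_policy A B g alpha x pi /\
     forall t, B (pi t) = \sum_(j < r) rho j (B (pis j t))) /\
   forall vs : 'I_r -> ecost,
     (forall i, Jstar_is A (bi i) g alpha (rho i x) (vs i)) ->
     v = \big[ecost_add/Fin R0]_(i < r) vs i.
Proof.
move=> Hv Hopt Hu.
have [pi Hpi] := my_choice Hu.
have Hs : forall i t, rho i (B (pi t)) = rho i (B (pis i t)).
  by move=> i t; rewrite Hpi (proj_sumB hdec hproj).
have [ws Hws] := my_choice Hopt.
have Hc := cost_split Hs (fun i => proj2 (Hws i)).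
have Hlow := lower Hv (fun i => proj1 (Hws i)).
have Hup := proj2 Hv _ _ Hc.
have E := ele_antisym _ _ Hup Hlow.
exists pi; split.
  split => //; exists v; split => //; by rewrite E.
move=> vs Hvs; rewrite E; apply: eq_bigr => i _.
exact: (Jstar_uniq (proj1 (Hws i)) (Hvs i)).
Qed.


Lemma step_in i z u : z \in Xs i -> A z + rho i (B u) \in Xs i.
Proof.
move=> hz; have [_ [_ [_ hA]]] := hdec.
apply: memvD; last exact: (proj_in hproj).
by apply: (subvP (hA i)); apply: memv_img.
Qed.

Hypothesis hmin : minima_attained A B g alpha (fun _ => True).
Hypothesis hmin_sub : forall i, minima_attained A (bi i) g alpha (fun z => z \in Xs i).

Lemma dir_back :
  (forall us : 'I_r -> X -> U,
      (forall i, optimal_law A (bi i) g alpha (fun z => z \in Xs i) (us i)) ->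
      exists ustar : X -> U,
        optimal_law A B g alpha (fun _ => True) ustar /\
        (forall x i, rho i (A x + B (ustar x)) = A (rho i x) + rho i (B (us i (rho i x))))) ->
  is_decomposition_of rho A B g alpha.
Proof.
move=> Hlaw x.
have Key : forall pis : 'I_r -> nat -> U,
    (forall i, optimal_policy A (bi i) g alpha (rho i x) (pis i)) ->
    forall t, exists u, B u = \sum_(j < r) rho j (B (pis j t)).
  move=> pis Hopt t.
  pose z i := traj A (bi i) (rho i x) (pis i) t.
  pose s := \sum_(j < r) z j.
  have Hz : forall i, z i \in Xs i by move=> i; apply: traj_in; apply: (proj_in hproj).
  have Hrs : forall i, rho i s = z i by move=> i; apply: (proj_unique hdec hproj).
  have Harg : forall i, argmin_Jstar A (bi i) g alpha (z i) (pis i t).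
    move=> i; apply: (opt_argmin_all hg ha (D := fun z => z \in Xs i)).
    - by move=> z0 u0; apply: step_in.
    - by move=> z0 hz0; apply: (proj1 (hmin_sub i)).
    - exact: (proj_in hproj).
    - exact: Hopt.
  have Hex : forall i y, exists u, y \in Xs i -> argmin_Jstar A (bi i) g alpha y u.
    move=> i y; case: (classic (y \in Xs i)) => hy.
      have [u Hu] := proj2 (hmin_sub i) y hy; by exists u.
    by exists 0 => /hy.
  have [ch Hch] := my_choice (fun i => my_choice (Hex i)).
  pose us i y := if y == z i then pis i t else ch i y.
  have Hlaws : forall i, optimal_law A (bi i) g alpha (fun z => z \in Xs i) (us i).
    move=> i y hy; rewrite /us; case: eqP => [->|_]; [exact: Harg|exact: Hch].
  have [ustar [_ Heq]] := Hlaw us Hlaws.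
  exists (ustar s).
  have E : forall i, rho i (A s + B (ustar s)) = A (rho i s) + rho i (B (pis i t)).
    by move=> i; rewrite Heq Hrs /us eqxx.
  have : A s + B (ustar s) = A s + \sum_(j < r) rho j (B (pis j t)).
    rewrite -[LHS](proj_sum hproj) (eq_bigr _ (fun i _ => E i)) big_split /=.
    by rewrite -linear_sum (proj_sum hproj).
  by move/addrI.
split.
- move=> v vs Hv Hvs.
  have Hopt : forall i, exists p, optimal_policy A (bi i) g alpha (rho i x) p.
    move=> i; have [[p Hp] _] := Hvs i; exists p; exists (vs i); split => //.
  have [pis Hpis] := my_choice Hopt.
  have [pi [_ H]] := combine Hv Hpis (Key _ Hpis).
  exact: H.
- move=> pis Hpis.
  have [v Hv] := proj1 hmin x I.
  have [pi [H _]] := combine Hv Hpis (Key _ Hpis).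
  by exists pi.
Qed.

Lemma dir_fwd : is_decomposition_of rho A B g alpha ->
  (forall us : 'I_r -> X -> U,
      (forall i, optimal_law A (bi i) g alpha (fun z => z \in Xs i) (us i)) ->
      exists ustar : X -> U,
        optimal_law A B g alpha (fun _ => True) ustar /\
        (forall x i, rho i (A x + B (ustar x)) = A (rho i x) + rho i (B (us i (rho i x))))).
Proof.
move=> Hdec us Hus.
have Hx : forall x, exists u, argmin_Jstar A B g alpha x u /\
    B u = \sum_(j < r) rho j (B (us j (rho j x))).
  move=> x.
  have hz : forall i, rho i x \in Xs i by move=> i; apply: (proj_in hproj).
  have Hp : forall i, exists p, exists w,
      Jstar_is A (bi i) g alpha (A (rho i x) + rho i (B (us i (rho i x)))) w /\
      cost_is A (bi i) g alpha (A (rho i x) + rho i (B (us i (rho i x)))) p w.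
    move=> i; have [w [[p Hp] Hl]] := proj1 (hmin_sub i) _ (step_in (us i (rho i x)) (hz i)).
    by exists p, w; split => //; split => //; exists p.
  have [p Hpp] := my_choice Hp.
  pose pis i := pcons (us i (rho i x)) (p i).
  have Hopt : forall i, optimal_policy A (bi i) g alpha (rho i x) (pis i).
    move=> i; have [w [Hw Hpw]] := Hpp i.
    have [vi Hvi] := proj1 (hmin_sub i) _ (hz i).
    exists vi; split => //.
    have Hc : cost_is A (bi i) g alpha (rho i x) (pis i) (step (g (rho i x)) alpha w).
      exact: (cost_step ha Hpw).
    suff -> : vi = step (g (rho i x)) alpha w by [].
    apply: ele_antisym; first exact: (bellman ha Hvi Hw).
    have [[ps Hps] _] := Hvi.
    have [w0 Hw0] := proj1 (hmin_sub i) _ (step_in (ps O) (hz i)).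
    have [ws Hws] := cost_ex A (bi i) hg ha (A (rho i x) + rho i (B (ps O))) (fun t => ps t.+1).
    rewrite (cost_step_inv hg ha Hps Hws).
    apply/(step_le _ _ _ _ ha).
    apply: ele_trans (Hus i (rho i x) (hz i) (ps O) w w0 Hw Hw0) _.
    exact: (proj2 Hw0 _ _ Hws).
  have [pi [Hpiopt HB]] := proj2 (Hdec x) pis Hopt.
  exists (pi O); split; last exact: (HB O).
  have [w Hw] := proj1 hmin (A x + B (pi O)) I.
  by case: (opt_step hg ha (ex_intro _ w Hw) Hpiopt).
have [ustar Hu] := my_choice Hx.
exists ustar; split.
- by move=> x _; exact: (proj1 (Hu x)).
- move=> x i; rewrite linearD /= (proj_A hdec hproj) (proj2 (Hu x)).
  by rewrite (proj_sumB hdec hproj).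
Qed.

End Main.

Unset Implicit Arguments.
Local Open Scope ring_scope.

Theorem lemma4 (F : fieldType) (X U : vectType F) (A : 'End(X)) (B : 'Hom(U, X))
  (r : nat) (Xs : 'I_r -> {vspace X}) (rho : 'I_r -> 'End(X)) (g : X -> R) (alpha : R) :
  injective B ->
  decomposition_over Xs A ->
  projections Xs rho ->
  cost_fun g ->
  in_Gs rho g ->
  Rlt R0 alpha -> Rlt alpha R1 ->
  minima_attained A B g alpha (fun _ => True) ->
  (forall i, minima_attained A (fun u => rho i (B u)) g alpha (fun z => z \in Xs i)) ->
  (is_decomposition_of rho A B g alpha <->
   (forall us : 'I_r -> X -> U,
      (forall i, optimal_law A (fun u => rho i (B u)) g alpha (fun z => z \in Xs i) (us i)) ->
      exists ustar : X -> U,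
        optimal_law A B g alpha (fun _ => True) ustar /\
        (forall x i, rho i (A x + B (ustar x)) = A (rho i x) + rho i (B (us i (rho i x)))))).
Proof.
move=> _ hdec hproj hcf hGs ha _ hmin hmin_sub.
have hg : forall x, Rle R0 (g x) by move=> x; case: (hcf x).
split.
- by apply: dir_fwd.
- by apply: dir_back.
Qed.
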